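(* Let $I\subset\mathbb{R}$ be an interval, $n\in\mathbb{N}$ and let $f:I\to\mathbb{R}$ be $n$-convex. Fix $k\in\mathbb{N}$ with $k\le n$ and points $x_1<\dots<x_k$ in $I$. Assign to each $x_j$ a multiplicity $l_j\in\mathbb{N}$ ($j=1,\dots,k$) such that $l_1+\dots+l_k=n+1$, and such that $l_1=1$ if $x_1=\inf I$, and $l_k=1$ if $x_k=\sup I$. Let $I_0=(-\infty,x_1)$, $I_j=(x_j,x_{j+1})$ for $j=1,\dots,k-1$, and $I_k=(x_k,\infty)$. Then there exists a polynomial $p\in\Pi_n$ such that $p(x_j)=f(x_j)$ for $j=1,\dots,k$ and $(-1)^{n+1}\bigl(f(x)-p(x)\bigr)\ge 0$ for $x\in I_0\cap I$; $(-1)^{n+1-(l_1+\dots+l_j)}\bigl(f(x)-p(x)\bigr)\ge 0$ for $x\in I_j$, $j=1,\dots,k-1$; $f(x)-p(x)\ge 0$ for $x\in I_k\cap I$.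
   Context: $\Pi_n$ denotes the set of real polynomials of degree at most $n$. Divided differences are defined recursively by $[x_1;f]:=f(x_1)$ and $[x_1,\dots,x_{m+1};f]:=\frac{[x_2,\dots,x_{m+1};f]-[x_1,\dots,x_m;f]}{x_{m+1}-x_1}$ for pairwise distinct points. For $n\in\mathbb{N}$, a function $f:I\to\mathbb{R}$ is called $n$-convex if $[x_1,\dots,x_{n+2};f]\ge 0$ for all pairwise distinct $x_1,\dots,x_{n+2}\in I$. *)

(* Defs.v *)
From HB Require Import structures.
From mathcomp Require Import all_boot all_order all_algebra.
From mathcomp Require Import classical_sets reals.
Set Implicit Arguments. Unset Strict Implicit. Unset Printing Implicit Defensive.
Import Order.TTheory GRing.Theory Num.Theory.
Local Open Scope ring_scope.

Definition is_interval (R : realType) (E : set R) :=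
  forall x y, E x -> E y -> forall z, x <= z <= y -> E z.

Fixpoint divdiff (R : realType) (f : R -> R) (m : nat) (s : seq R) : R :=
  match m with
  | 0%N => f (head 0 s)
  | m'.+1 => (divdiff f m' (behead s) - divdiff f m' (take m'.+1 s))
             / (nth 0 s m'.+1 - head 0 s)
  end.

Definition dd (R : realType) (f : R -> R) (s : seq R) : R :=
  divdiff f (size s).-1 s.

Definition n_convex (R : realType) (I : set R) (n : nat) (f : R -> R) :=
  forall s : seq R, size s = n.+2 -> uniq s -> (forall y, y \in s -> I y) ->
    0 <= dd f s.

(* Main.v *)
From Pilot Require Import Defs.
From HB Require Import structures.
From mathcomp Require Import all_boot all_order all_algebra.
From mathcomp Require Import classical_sets reals.
From mathcomp Require Import ring lra zify.
Import Order.TTheory GRing.Theory Num.Theory.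
Set Implicit Arguments. Unset Strict Implicit. Unset Printing Implicit Defensive.
Local Open Scope ring_scope.


Definition DD (R : realType) (f : R -> R) (s : seq R) : R :=
  \sum_(x <- s) f x / \prod_(y <- s | y != x) (x - y).

Lemma DD_perm (R : realType) (f : R -> R) s1 s2 : perm_eq s1 s2 -> DD f s1 = DD f s2.
Proof.
move=> P; rewrite /DD (perm_big _ P); apply: eq_bigr => x _.
by rewrite (perm_big _ P).
Qed.

Lemma prod_notin (R : realType) (u : seq R) x (F : R -> R) : x \notin u ->
  \prod_(y <- u | y != x) F y = \prod_(y <- u) F y.
Proof.
move=> xu; rewrite big_seq_cond [RHS]big_seq; apply: eq_bigl => y.
by case: (boolP (y \in u)) => //= yu; apply/negP => /eqP ?; subst; rewrite yu in xu.
Qed.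

Lemma prod_filt_neq0 (R : realType) (u : seq R) x :
  \prod_(y <- u | y != x) (x - y) != 0.
Proof.
rewrite prodf_seq_neq0; apply/allP => y _; apply/implyP => yx.
by rewrite subr_eq0 eq_sym.
Qed.

Lemma DD_cons (R : realType) (f : R -> R) t Y : uniq (t :: Y) ->
  DD f (t :: Y) = f t / \prod_(y <- Y) (t - y) +
    \sum_(y <- Y) f y / ((y - t) * \prod_(z <- Y | z != y) (y - z)).
Proof.
move=> /= /andP[tY uY]; rewrite /DD big_cons big_cons eqxx /= prod_notin //.
congr (_ + _); rewrite big_seq [RHS]big_seq; apply: eq_bigr => x xY.
rewrite big_cons; have -> : (t != x) by apply/negP => /eqP ?; subst; rewrite xY in tY.
by [].
Qed.

Lemma DD_rec (R : realType) (f : R -> R) a b u : uniq (a :: b :: u) ->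
  DD f (a :: b :: u) = (DD f (a :: u) - DD f (b :: u)) / (a - b).
Proof.
move=> U; have U' := U; move: U' => /= /andP[]; rewrite inE negb_or => /andP[ab au] /andP[bu uu].
rewrite (DD_cons f U) (@DD_cons _ f a u) /= ?au ?uu // (@DD_cons _ f b u) /= ?bu ?uu //.
rewrite !big_cons eqxx /= (prod_notin _ bu).
have -> : \sum_(j <- u) f j / ((j - a) * \prod_(z <- b :: u | z != j) (j - z)) =
  \sum_(j <- u) f j / ((j - a) * ((j - b) * \prod_(z <- u | z != j) (j - z))).
  rewrite big_seq [RHS]big_seq; apply: eq_bigr => j ju; rewrite big_cons.
  by have -> : (b != j) by apply/negP => /eqP ?; subst; rewrite ju in bu.
have ab0 : a - b != 0 by rewrite subr_eq0.
have Pa : \prod_(y <- u) (a - y) != 0.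
  by rewrite -(prod_notin _ au) prod_filt_neq0.
have Pb : \prod_(y <- u) (b - y) != 0.
  by rewrite -(prod_notin _ bu) prod_filt_neq0.
have -> : \sum_(y <- u) f y / ((y - a) * ((y - b) * \prod_(z <- u | z != y) (y - z))) =
  (\sum_(y <- u) f y / ((y - a) * \prod_(z <- u | z != y) (y - z)) -
   \sum_(y <- u) f y / ((y - b) * \prod_(z <- u | z != y) (y - z))) / (a - b).
  rewrite -sumrB mulr_suml big_seq [RHS]big_seq; apply: eq_bigr => y yu.
  have ya : y - a != 0 by rewrite subr_eq0; apply/negP => /eqP ?; subst; rewrite yu in au.
  have yb : y - b != 0 by rewrite subr_eq0; apply/negP => /eqP ?; subst; rewrite yu in bu.
  have := prod_filt_neq0 u y; set P := \prod_(_ <- _ | _) _ => P0.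
  field; apply/and4P; split => //.
have ba0 : b - a != 0 by rewrite -opprB oppr_eq0.
field; rewrite Pa Pb ab0 ba0 //.
Qed.

Lemma divdiff_DD (R : realType) (f : R -> R) m s : size s = m.+1 -> uniq s ->
  divdiff f m s = DD f s.
Proof.
elim: m s => [|m IH] s.
  case: s => [|x [|? ?]] //= _ _.
  by rewrite /DD big_cons big_nil big_cons eqxx big_nil divr1 addr0.
case: s => [|x s'] //= [] Hs /andP[xs us].
case/lastP: s' Hs xs us => [|r y] //; rewrite size_rcons => -[Hr] xs us.
rewrite -cats1 take_size_cat // cats1 nth_rcons Hr ltnn eqxx.
rewrite IH ?size_rcons ?Hr // IH /= ?Hr //; last first.
  move: us xs; rewrite rcons_uniq mem_rcons inE negb_or /= => /andP[_ ->] /andP[_ ->].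
  by [].
have P1 : perm_eq (rcons r y) (y :: r) by rewrite perm_rcons.
have P2 : perm_eq (x :: rcons r y) (y :: x :: r).
  apply: (@perm_trans _ (x :: y :: r)); first by rewrite perm_cons perm_rcons.
  by rewrite -[x :: y :: r]/([:: x] ++ [:: y] ++ r) perm_catCA.
rewrite (DD_perm f P1) (DD_perm f P2) DD_rec //.
by rewrite -(perm_uniq P2) /= xs.
Qed.

Definition nconv (R : realType) (I : set R) (n : nat) (f : R -> R) :=
  forall s : seq R, size s = n.+2 -> uniq s -> (forall y, y \in s -> I y) ->
    0 <= DD f s.

Lemma n_convex_nconv (R : realType) (I : set R) n f : n_convex I n f -> nconv I n f.
Proof.
move=> H s Hs us sI; rewrite -(@divdiff_DD _ f n.+1) ?Hs //.
by have := H s Hs us sI; rewrite /dd Hs.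
Qed.

Definition slope (R : realType) (f : R -> R) (a c : R) :=
  fun y => if y == a then c else (f y - f a) / (y - a).

Lemma perm_swap12 (T : eqType) (a b : T) u : perm_eq (a :: b :: u) (b :: a :: u).
Proof. by rewrite -[a :: b :: u]/([:: a] ++ [:: b] ++ u) perm_catCA. Qed.

Lemma perm_swap3 (T : eqType) (a b c : T) u : perm_eq (a :: b :: c :: u) (b :: c :: a :: u).
Proof. by rewrite -[a :: b :: c :: u]/([:: a] ++ [:: b; c] ++ u) perm_catCA. Qed.

Lemma DD_slope (R : realType) (f : R -> R) a c Y : uniq (a :: Y) -> Y != [::] ->
  DD (slope f a c) Y = DD f (a :: Y).
Proof.
move: {2}(size Y) (erefl (size Y)) => m; elim: m Y => [|m IH] Y.
  by case: Y.
case: m IH => [|m] IH.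
  case: Y => [|y [|??]] //= _ /andP[]; rewrite !inE => ay _ _.
  rewrite [RHS]DD_cons; last by rewrite /= inE ay.
  rewrite /DD !big_cons !big_nil ?eqxx /slope eq_sym (negPf ay) /= ?mulr1 ?divr1 ?addr0.
  have ya : y - a != 0 by rewrite subr_eq0 eq_sym.
  have ay0 : a - y != 0 by rewrite subr_eq0.
  by field; rewrite ya ay0.
case: Y => [|b [|b2 u]] //= [Hs] U _.
have U1 : uniq [:: b, b2 & u] by case/andP: U.
have U0 : uniq [:: a, b, b2 & u] := U.
have Ua : uniq [:: a, b & u].
  apply: (subseq_uniq _ U0).
  by rewrite -[[:: a, b & u]]/([:: a; b] ++ u) -[[:: a, b, b2 & u]]/([:: a; b] ++ (b2 :: u)) cat_subseq ?subseq_refl ?subseq_cons.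
have Ub : uniq [:: a, b2 & u].
  apply: (subseq_uniq _ U0).
  by rewrite -[[:: a, b2 & u]]/([:: a] ++ (b2 :: u)) -[[:: a, b, b2 & u]]/([:: a] ++ (b :: b2 :: u)) cat_subseq ?subseq_refl ?subseq_cons.
rewrite DD_rec // !IH //= ?Hs //.
have P := perm_swap3 a b b2 u.
rewrite (DD_perm f P) DD_rec; last by rewrite -(perm_uniq P).
by rewrite (DD_perm f (perm_swap12 b a u)) (DD_perm f (perm_swap12 b2 a u)).
Qed.

Lemma step (R : realType) n (I J : set R) (f : R -> R) zs a c (q : {poly R}) :
  a \in zs -> (forall y, I y -> y != a -> J y) -> (size q <= n.+1)%N ->
  (forall z, z \in rem a zs -> q.[z] = slope f a c z) ->
  (forall y, J y -> 0 <= \prod_(z <- rem a zs) (y - z) * (slope f a c y - q.[y])) ->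
  exists p : {poly R}, (size p <= n.+2)%N /\ (forall z, z \in zs -> p.[z] = f z) /\
    (forall y, I y -> 0 <= \prod_(z <- zs) (y - z) * (f y - p.[y])).
Proof.
move=> azs IJ sq qz qsign; exists ((f a)%:P + ('X - a%:P) * q); split; last split.
- apply: (leq_trans (size_add _ _)); rewrite geq_max; apply/andP; split.
    by apply: (leq_trans (size_polyC_leq1 _)).
  apply: (leq_trans (size_mul_leq _ _)); rewrite size_XsubC.
  by rewrite addSn /=.
- move=> z zzs; rewrite !hornerE.
  have [->|za] := eqVneq z a; first by rewrite subrr mul0r addr0.
  rewrite qz; last by rewrite rem_mem.
  rewrite /slope (negPf za).
  have : z - a != 0 by rewrite subr_eq0.
  by move=> H; field.
- move=> y Iy.
  have E : \prod_(z <- zs) (y - z) = (y - a) * \prod_(z <- rem a zs) (y - z).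
    by rewrite (perm_big _ (perm_to_rem azs)) big_cons.
  rewrite E !hornerE.
  have [->|ya] := eqVneq y a; first by rewrite !subrr /= !mul0r.
  have H := qsign y (IJ y Iy ya); rewrite /slope (negPf ya) in H.
  have ya0 : y - a != 0 by rewrite subr_eq0.
  have -> : f y - (f a + (y - a) * q.[y]) = (y - a) * ((f y - f a) / (y - a) - q.[y]).
    by field.
  move: H; set P := \prod_(_ <- _) _; set Q := (_ / _ - _) => H.
  have -> : (y - a) * P * ((y - a) * Q) = (y - a) ^+ 2 * (P * Q) by ring.
  by apply: mulr_ge0 => //; exact: sqr_ge0.
Qed.

Lemma mid_between (R : realType) (x y : R) : x < y -> x < (x + y) / 2 /\ (x + y) / 2 < y.
Proof. move=> xy; split; lra. Qed.

Definition EXTprop (R : realType) := forall (I : set R) n f a u v, is_interval I ->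
  nconv I n.+1 f -> I u -> I v -> u < a -> a < v -> I a ->
  exists c, nconv I n (slope f a c).

Definition twosided (R : realType) (I : set R) (z : R) :=
  (exists y, I y /\ y < z) /\ (exists y, I y /\ z < y).

Lemma count_gt0_mem (T : eqType) (x : T) s : x \in s -> (0 < count_mem x s)%N.
Proof. by move=> xs; rewrite -has_count has_pred1. Qed.

Lemma G (R : realType) (EXT : EXTprop R) n : forall (I : set R) f zs,
  is_interval I -> nconv I n f -> size zs = n.+1 -> (forall z, z \in zs -> I z) ->
  (forall z, z \in zs -> (1 < count_mem z zs)%N -> twosided I z) ->
  exists p : {poly R}, (size p <= n.+1)%N /\ (forall z, z \in zs -> p.[z] = f z) /\
    (forall y, I y -> 0 <= \prod_(z <- zs) (y - z) * (f y - p.[y])).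
Proof.
elim: n => [|n IH] I f zs hI hf hs zI ztwo.
  case: zs hs zI ztwo => [|z [|??]] // _ zI _.
  exists (f z)%:P; split; first exact: size_polyC_leq1.
  split; first by move=> z'; rewrite inE => /eqP ->; rewrite hornerC.
  move=> y Iy; rewrite big_cons big_nil mulr1 hornerC.
  have [->|yz] := eqVneq y z; first by rewrite subrr mul0r.
  have Iz := zI z (mem_head _ _).
  have : 0 <= DD f [:: y; z].
    apply: hf => //; first by rewrite /= inE yz.
    by move=> t; rewrite !inE => /orP[] /eqP ->.
  rewrite /DD !big_cons !big_nil !eqxx /= eq_sym yz /= !mulr1 !addr0.
  have yz0 : y - z != 0 by rewrite subr_eq0.
  have -> : f y / (y - z) + f z / (z - y) = (f y - f z) / (y - z).
    have zy0 : z - y != 0 by rewrite subr_eq0 eq_sym.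
    by field; rewrite yz0 zy0.
  move=> H; have -> : (y - z) * (f y - f z) = (y - z) ^+ 2 * ((f y - f z) / (y - z)).
    by field.
  by apply: mulr_ge0 => //; exact: sqr_ge0.
have zs0 : zs != [::] by case: zs hs zI ztwo.
case: (boolp.pselect (exists a, a \in zs /\ ~ twosided I a)) => [[a [azs Na]]|Hall].
-
  have ca : count_mem a zs = 1%N.
    have := count_gt0_mem azs; case: (count_mem a zs) (ztwo a azs) => [|[|m]] //.
    by move=> /(_ erefl) /Na.
  have arem : a \notin rem a zs.
    by apply/count_memPn; rewrite count_mem_rem ca eqxx.
  pose J := fun y => I y /\ y != a.
  have hJ : is_interval J.
    move=> x y [Ix xa] [Iy ya] z /andP[xz zy]; split; first by apply: (hI x y) => //; rewrite xz zy.
    apply/negP => /eqP za; subst z; apply: Na; split.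
      by exists x; split => //; rewrite lt_neqAle xa xz.
    by exists y; split => //; rewrite lt_neqAle eq_sym ya zy.
  have hJf : nconv J n (slope f a 0).
    move=> s ss us sJ.
    have as_ : a \notin s by apply/negP => /sJ [_]; rewrite eqxx.
    rewrite DD_slope; last by case: s ss {us sJ as_}.
      apply: hf => //=; first by rewrite ss.
        by rewrite as_ us.
      by move=> y; rewrite inE => /orP[/eqP ->|/sJ []//]; exact: zI.
    by rewrite /= as_ us.
  have h1 : size (rem a zs) = n.+1 by rewrite size_rem // hs.
  have h2 : forall z, z \in rem a zs -> J z.
    move=> z zr; split; first by apply: zI; exact: mem_rem zr.
    by apply/negP => /eqP za; subst z; rewrite zr in arem.
  have h3 : forall z, z \in rem a zs -> (1 < count_mem z (rem a zs))%N -> twosided J z.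
    move=> z zr cz.
    have zzs := mem_rem zr.
    have za : z != a by apply/negP => /eqP za; subst z; rewrite zr in arem.
    have [[y1 [Iy1 y1z]] [y2 [Iy2 zy2]]] : twosided I z.
      apply: ztwo => //; move: cz; rewrite count_mem_rem.
      by move=> H; apply: (leq_trans H); exact: leq_subr.
    have Iz := zI z zzs.
    split.
    * case: (eqVneq y1 a) => [y1a|y1a]; last by exists y1.
      have [m1 m2] := mid_between y1z.
      exists ((y1 + z) / 2); split => //; split.
        by apply: (hI y1 z) => //; rewrite !ltW.
      by rewrite -y1a gt_eqF.
    * case: (eqVneq y2 a) => [y2a|y2a]; last by exists y2.
      have [m1 m2] := mid_between zy2.
      exists ((z + y2) / 2); split => //; split.
        by apply: (hI z y2) => //; rewrite !ltW.
      by rewrite -y2a lt_eqF.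
  have [q [sq [qz qs]]] := IH J (slope f a 0) (rem a zs) hJ hJf h1 h2 h3.
  have := step (I := I) (J := J) azs _ sq qz qs.
  by apply => y Iy ya; split.
-
  have two : forall z, z \in zs -> twosided I z.
    by move=> z zzs; apply: boolp.contrapT => Nz; apply: Hall; exists z.
  pose a := head 0 zs.
  have azs : a \in zs by rewrite /a; case: (zs) zs0 => // x s _; exact: mem_head.
  have [[u [Iu ua]] [v [Iv av]]] := two a azs.
  have [c hc] := EXT I n f a u v hI hf Iu Iv ua av (zI a azs).
  have h1 : size (rem a zs) = n.+1 by rewrite size_rem // hs.
  have h2 : forall z, z \in rem a zs -> I z.
    by move=> z zr; apply: zI; exact: mem_rem zr.
  have h3 : forall z, z \in rem a zs -> (1 < count_mem z (rem a zs))%N -> twosided I z.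
    by move=> z zr _; apply: two; exact: mem_rem zr.
  have [q [sq [qz qs]]] := IH I (slope f a c) (rem a zs) hI hc h1 h2 h3.
  have := step (I := I) (J := I) azs _ sq qz qs.
  by apply => y Iy ya.
Qed.

Lemma iter_mulE (R : realType) (c : R) m : iter m (GRing.mul c) 1 = c ^+ m.
Proof. by elim: m => //= m ->; rewrite exprS. Qed.

Lemma prod_expr_sum (R : realType) (c : R) (r : seq nat) (g : nat -> nat) :
  \prod_(i <- r) c ^+ g i = c ^+ (\sum_(i <- r) g i)%N.
Proof. by elim: r => [|i r IH]; rewrite ?big_nil ?expr0 // !big_cons IH exprD. Qed.

Lemma prod_nat_gt0 (R : realType) m n (F : nat -> R) :
  (forall i, (m <= i < n)%N -> 0 < F i) -> 0 < \prod_(m <= i < n) F i.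
Proof.
move=> H; rewrite big_nat_cond; apply: prodr_gt0 => i /andP[Hi _]; exact: H.
Qed.

Lemma sign_prod (R : realType) (x : nat -> R) (l : nat -> nat) k J y :
  (J <= k)%N -> (forall i, (1 <= i <= J)%N -> x i < y) ->
  (forall i, (J < i <= k)%N -> y < x i) ->
  exists A, 0 < A /\ \prod_(1 <= i < k.+1) (y - x i) ^+ l i =
    (-1) ^+ (\sum_(J.+1 <= i < k.+1) l i)%N * A.
Proof.
move=> Jk Hl Hr.
rewrite (big_cat_nat (n := J.+1)) //=.
rewrite [X in _ * X](eq_big_nat _ _ (F2 := fun i => (-1) ^+ l i * (x i - y) ^+ l i)); last first.
  by move=> i _; rewrite -exprNn opprB.
rewrite big_split /= prod_expr_sum.
exists (\prod_(1 <= i < J.+1) (y - x i) ^+ l i * \prod_(J.+1 <= i < k.+1) (x i - y) ^+ l i).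
split; last by rewrite mulrCA.
apply: mulr_gt0; apply: prod_nat_gt0 => i /andP[a b]; apply: exprn_gt0.
  by rewrite subr_gt0; apply: Hl; rewrite a -ltnS.
by rewrite subr_gt0; apply: Hr; rewrite a -ltnS.
Qed.

Theorem theorem1_of (R : realType) (EXT : EXTprop R) (I : set R) (hI : is_interval I)
  (n : nat) (f : R -> R) (hf : n_convex I n f)
  (k : nat) (hk1 : (1 <= k)%N) (hkn : (k <= n)%N)
  (x : nat -> R) (l : nat -> nat)
  (hxI : forall j, (1 <= j <= k)%N -> I (x j))
  (hxinc : forall j, (1 <= j < k)%N -> x j < x j.+1)
  (hlpos : forall j, (1 <= j <= k)%N -> (0 < l j)%N)
  (hlsum : (\sum_(1 <= j < k.+1) l j)%N = n.+1)
  (hl1 : (forall y, I y -> x 1%N <= y) -> l 1%N = 1%N)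
  (hlk : (forall y, I y -> y <= x k) -> l k = 1%N) :
  exists p : {poly R}, (size p <= n.+1)%N /\
    (forall j, (1 <= j <= k)%N -> p.[x j] = f (x j)) /\
    (forall y, I y -> y < x 1%N -> 0 <= (-1) ^+ n.+1 * (f y - p.[y])) /\
    (forall j, (1 <= j < k)%N -> forall y, x j < y < x j.+1 ->
       0 <= (-1) ^+ (n.+1 - \sum_(1 <= i < j.+1) l i)%N * (f y - p.[y])) /\
    (forall y, I y -> x k < y -> 0 <= f y - p.[y]).
Proof.
have xlt : forall i j, (1 <= i)%N -> (i < j)%N -> (j <= k)%N -> x i < x j.
  move=> i j i1; elim: j => // j IH; rewrite ltnS leq_eqVlt => /orP[/eqP <-|ij] jk.
    by apply: hxinc; rewrite i1 (leq_trans _ jk).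
  apply: (lt_trans (IH ij (ltnW jk))); apply: hxinc; rewrite jk andbT.
  exact: leq_trans i1 (ltnW ij).
have xle : forall i j, (1 <= i)%N -> (i <= j)%N -> (j <= k)%N -> x i <= x j.
  move=> i j i1; rewrite leq_eqVlt => /orP[/eqP ->|ij] jk //.
  exact/ltW/xlt.
pose r := index_iota 1 k.+1.
have memr : forall i, (i \in r) = (1 <= i <= k)%N.
  by move=> i; rewrite /r mem_index_iota.
pose zs := flatten [seq nseq (l i) (x i) | i <- r].
have hzs : forall z, z \in zs -> exists2 i, (1 <= i <= k)%N & z = x i.
  move=> z /flatten_mapP [i]; rewrite memr => ik; rewrite mem_nseq => /andP[_ /eqP ->].
  by exists i.
have xzs : forall j, (1 <= j <= k)%N -> x j \in zs.
  move=> j jk; apply/flatten_mapP; exists j; first by rewrite memr.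
  by rewrite mem_nseq hlpos // eqxx.
have cnt : forall j, (1 <= j <= k)%N -> count_mem (x j) zs = l j.
  move=> j jk; rewrite count_flatten sumnE !big_map.
  rewrite (bigD1_seq j) ?memr ?iota_uniq //= count_nseq /= eqxx mul1n.
  rewrite big1_seq ?addn0 // => i /andP[ij]; rewrite memr => ik.
  rewrite count_nseq /=; case: (eqVneq (x i) (x j)) => //= xij.
  case/andP: ik => i1 ik; case/andP: jk => j1 jk.
  have [ltij|ltji|eij] := ltngtP i j.
  - by have := xlt i j i1 ltij jk; rewrite xij ltxx.
  - by have := xlt j i j1 ltji ik; rewrite xij ltxx.
  - by rewrite eij eqxx in ij.
have szs : size zs = n.+1.
  rewrite size_flatten /shape -map_comp sumnE big_map -hlsum.
  by apply: eq_bigr => i _; rewrite /= size_nseq.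
have zI : forall z, z \in zs -> I z.
  move=> z /hzs [i ik ->]; exact: hxI.
have ztwo : forall z, z \in zs -> (1 < count_mem z zs)%N -> twosided I z.
  move=> z /hzs [j jk ->]; rewrite cnt // => lj; split.
  + have [j1|j1|j1] := ltngtP j 1.
    * by case/andP: jk; case: (j) j1.
    * exists (x j.-1); split.
        by apply: hxI; case/andP: jk => _ jk; apply/andP; split; lia.
      by case/andP: jk => _ jk; apply: xlt; lia.
    * subst j; apply: boolp.contrapT => H; move: lj; rewrite hl1 // => y Iy.
      by rewrite leNgt; apply/negP => yx; apply: H; exists y.
  + have [jk'|jk'|jk'] := ltngtP j k.
    * exists (x j.+1); split; last by apply: hxinc; case/andP: jk => -> _.
      by apply: hxI; rewrite jk'.
    * by move: jk; case/andP => _; rewrite leqNgt jk'.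
    * subst j; apply: boolp.contrapT => H; move: lj; rewrite hlk // => y Iy.
      by rewrite leNgt; apply/negP => yx; apply: H; exists y.
have [p [sp [pz ps]]] := G EXT hI (n_convex_nconv hf) szs zI ztwo.
- have Pz : forall y, \prod_(z <- zs) (y - z) = \prod_(1 <= i < k.+1) (y - x i) ^+ l i.
    move=> y; rewrite big_flatten big_map /=; apply: eq_bigr => i _.
    by rewrite big_nseq iter_mulE.
  have key : forall J y, (J <= k)%N -> I y -> (forall i, (1 <= i <= J)%N -> x i < y) ->
      (forall i, (J < i <= k)%N -> y < x i) ->
      0 <= (-1) ^+ (\sum_(J.+1 <= i < k.+1) l i)%N * (f y - p.[y]).
    move=> J y Jk Iy Hl Hr; have [A [A0 EA]] := sign_prod l Jk Hl Hr.
    have := ps y Iy; rewrite Pz EA mulrAC.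
    by rewrite pmulr_lge0.
  exists p; split => //; split; last split; last split.
  + by move=> j jk; apply: pz; exact: xzs.
  + move=> y Iy yx; have := key 0%N y (leq0n _) Iy.
    rewrite hlsum; apply => i /andP[i0 ik]; first by move: i0 ik; case: i.
    by apply: (lt_le_trans yx); apply: xle.
  + move=> j /andP[j1 jk] y /andP[xy yx].
    have Iy : I y.
      apply: (hI (x j) (x j.+1)); [apply: hxI; rewrite j1 ltnW // | apply: hxI; rewrite jk andbT //|].
      by rewrite !ltW.
    have := key j y (ltnW jk) Iy.
    have -> : (n.+1 - \sum_(1 <= i < j.+1) l i)%N = (\sum_(j.+1 <= i < k.+1) l i)%N.
      by rewrite -hlsum (big_cat_nat (n := j.+1)) //= ?addKn // ltnS ltnW.
    apply.
      by move=> i /andP[i1 ij]; apply: (le_lt_trans _ xy); apply: xle => //; rewrite (ltnW jk).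
    move=> i /andP[ji ik]; apply: (lt_le_trans yx); apply: xle => //.
  + move=> y Iy xy; have := key k y (leqnn _) Iy.
    rewrite big_geq // expr0 mul1r; apply => i /andP[i1 ik]; last by exfalso; lia.
    by apply: (le_lt_trans _ xy); apply: xle.
Qed.

From mathcomp Require Import boolp topology normedtype realfun.
Import numFieldNormedType.Exports.
Local Open Scope classical_set_scope.
Local Open Scope ring_scope.

Lemma near_notin (R : realType) (Y : seq R) a : a \notin Y -> \forall t \near a^'+, t \notin Y.
Proof.
elim: Y => [|y Y IH]; first by move=> _; near=> t; rewrite in_nil.
rewrite inE negb_or => /andP[ay aY].
have H2 : \forall t \near a^'+, t != y.
  have [ya|ay'] := ltP y a.
    near=> t; have at_ : a < t by near: t; exact: nbhs_right_gt.
    by rewrite gt_eqF // (lt_trans ya at_).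
  have ay2 : a < y by rewrite lt_neqAle ay ay'.
  near=> t; have ty : t < y by near: t; exact: nbhs_right_lt.
  by rewrite lt_eqF.
near=> t; rewrite inE negb_or; apply/andP; split; near: t; [exact: H2|exact: IH].
Unshelve. all: by end_near.
Qed.

Lemma cvg_sumseq (R : realType) (T : Type) (F : set_system T) (FF : Filter F)
  (G : R -> T -> R) (L : R -> R) (r : seq R) :
  (forall b, b \in r -> G b t @[t --> F] --> L b) ->
  \sum_(b <- r) G b t @[t --> F] --> \sum_(b <- r) L b.
Proof.
elim: r => [|b r IH] H.
  rewrite big_nil; under eq_cvg do rewrite big_nil; exact: cvg_cst.
rewrite big_cons; under eq_cvg do rewrite big_cons.
apply: cvgD; first by apply: H; rewrite mem_head.
by apply: IH => b' b'r; apply: H; rewrite inE b'r orbT.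
Qed.

Lemma cvg_prodseq (R : realType) (T : Type) (F : set_system T) (FF : Filter F)
  (G : R -> T -> R) (L : R -> R) (r : seq R) :
  (forall b, b \in r -> G b t @[t --> F] --> L b) ->
  \prod_(b <- r) G b t @[t --> F] --> \prod_(b <- r) L b.
Proof.
elim: r => [|b r IH] H.
  rewrite big_nil; under eq_cvg do rewrite big_nil; exact: cvg_cst.
rewrite big_cons; under eq_cvg do rewrite big_cons.
apply: cvgM; first by apply: H; rewrite mem_head.
by apply: IH => b' b'r; apply: H; rewrite inE b'r orbT.
Qed.

Lemma exists_seq (R : realType) m (lo hi : R) : lo < hi ->
  exists s : seq R, [/\ size s = m, uniq s & forall b, b \in s -> lo < b < hi].
Proof.
elim: m lo => [|m IH] lo lohi; first by exists [::].
have [m1 m2] := mid_between lohi.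
have [s [ss us hs]] := IH _ m2.
exists ((lo + hi) / 2 :: s); split => /=; first by rewrite ss.
  rewrite us andbT; apply/negP => /hs /andP[]; by rewrite ltxx.
move=> b; rewrite inE => /orP[/eqP ->|/hs /andP[h1 h2]]; first by rewrite m1 m2.
by rewrite (lt_trans m1 h1) h2.
Qed.

Lemma DD_mono (R : realType) (I : set R) m f x y C : nconv I m f -> size C = m ->
  uniq (x :: y :: C) -> (forall z, z \in x :: y :: C -> I z) -> x < y ->
  DD f (x :: C) <= DD f (y :: C).
Proof.
move=> hf sC U HI xy.
have U' : uniq (y :: x :: C) by rewrite -(perm_uniq (perm_swap12 x y C)).
have := hf (y :: x :: C); rewrite /= sC => /(_ erefl U').
have HI' : forall z, z \in y :: x :: C -> I z.
  by move=> z zin; apply: HI; rewrite (perm_mem (perm_swap12 x y C)).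
move=> /(_ HI'); rewrite DD_rec // => H.
by rewrite -subr_ge0; move: H; rewrite pmulr_lge0 // invr_gt0 subr_gt0.
Qed.

Ltac neqs := intros; rewrite ?inE ?negb_or; repeat (apply/andP; split); try done;
  try (apply/eqP => ?; lra).

Lemma prod_sub_neq0 (R : realType) (t : R) (B : seq R) : t \notin B ->
  \prod_(b <- B) (t - b) != 0.
Proof. by move=> tB; rewrite -(prod_notin _ tB) prod_filt_neq0. Qed.

Lemma EXT_proof (R : realType) : EXTprop R.
Proof.
move=> I n f a u v hI hf Iu Iv ua av Ia.
pose g := slope f a 0.
pose w := (a + v) / 2.
have [aw wv] := mid_between av.
have [B [sB uB hB]] := exists_seq n wv.
have tI : forall t, a < t -> t < w -> I t.
  by move=> t at_ tw; apply: (hI a v) => //; rewrite !ltW // (lt_trans tw wv).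
have tB : forall t, t < w -> t \notin B.
  by move=> t tw; apply/negP => /hB /andP[wt _]; move: (lt_trans tw wt); rewrite ltxx.
have aB : a \notin B by exact: tB.
have uB' : u \notin B by apply: tB; exact: lt_trans ua aw.
pose phi t := DD g (t :: B).
have phiE : forall t, a < t -> t < w -> phi t = DD f (t :: a :: B).
  move=> t at_ tw; rewrite /phi DD_slope //=; last first.
    have := tB _ tw; neqs.
  exact: (DD_perm f (perm_swap12 a t B)).
have BI : forall z, z \in B -> I z.
  move=> z /hB /andP[wz zv]; apply: (hI a v) => //; rewrite !ltW //.
  exact: lt_trans aw wz.
have mono : forall t t', t \in `]a, w[ -> t' \in `]a, w[ -> t <= t' -> phi t <= phi t'.
  move=> t t'; rewrite !in_itv /= => /andP[at_ tw] /andP[at' t'w].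
  rewrite le_eqVlt => /orP[/eqP ->//|tt'].
  rewrite phiE // phiE //; apply: (DD_mono (m := n.+1) hf) => //=.
  - by rewrite sB.
  - have := tB _ tw; have := tB _ t'w; neqs.
  - move=> z; rewrite !inE => /orP[/eqP ->|/orP[/eqP ->|/orP[/eqP ->|/BI]]] //; exact: tI.
have lb : forall t, t \in `]a, w[ -> DD f (u :: a :: B) <= phi t.
  move=> t; rewrite in_itv /= => /andP[at_ tw].
  rewrite phiE //; apply: (DD_mono (m := n.+1) hf) => //=.
  - by rewrite sB.
  - have := tB _ tw; neqs.
  - move=> z; rewrite !inE => /orP[/eqP ->|/orP[/eqP ->|/orP[/eqP ->|/BI]]] //; exact: tI.
  - exact: lt_trans ua at_.
have ab : (BRight a < BLeft w)%O by rewrite bnd_simp.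
have hlb : has_lbound (phi @` [set` Interval (BRight a) (BLeft w)]).
  by exists (DD f (u :: a :: B)) => _ [t ht <-]; exact: lb.
have phicvg := nondecreasing_at_right_cvgr ab mono hlb.
set Phi := inf _ in phicvg.
pose kap (Y : seq R) y := \prod_(z <- Y | z != y) (y - z).
pose pi t := \prod_(b <- B) (t - b).
pose S t := \sum_(b <- B) g b / ((b - t) * kap B b).
have gE : forall t, a < t -> t < w -> g t = (phi t - S t) * pi t.
  move=> t at_ tw; rewrite /phi DD_cons /=; last by rewrite (tB _ tw) uB.
  have := prod_sub_neq0 (tB _ tw); rewrite -/(pi t) => p0.
  rewrite /S /kap; set SS := \sum_(_ <- _) _.
  by field.
pose c := (Phi - S a) * pi a.
have Scvg : S t @[t --> a^'+] --> S a.
  apply: cvg_at_right_filter; apply: cvg_sumseq => b bB.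
  apply: cvgM; first exact: cvg_cst.
  apply: cvgV.
    rewrite mulf_neq0 ?prod_filt_neq0 // subr_eq0.
    by apply/negP => /eqP ba; subst b; rewrite bB in aB.
  apply: cvgM; last exact: cvg_cst.
  apply: cvgB; [exact: cvg_cst | exact: cvg_id].
have picvg : forall Y : seq R, (fun t => \prod_(b <- Y) (t - b)) @ a^'+ --> \prod_(b <- Y) (a - b).
  move=> Y; apply: cvg_at_right_filter; apply: cvg_prodseq => b bB.
  apply: cvgB; [exact: cvg_id | exact: cvg_cst].
have gcvg : g t @[t --> a^'+] --> c.
  apply: (cvg_trans _ (cvgM (cvgB phicvg Scvg) (picvg B))).
  apply: near_eq_cvg; near=> t.
  have at_ : a < t by near: t; exact: nbhs_right_gt.
  have tw : t < w by near: t; exact: nbhs_right_lt.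
  by rewrite /= gE.
exists c => s ss us sI.
have s0 : s != [::] by case: s ss {us sI}.
case: (boolP (a \in s)) => [as_|nas]; last first.
  rewrite DD_slope //=; last by rewrite nas us.
  apply: hf => //=; first by rewrite ss.
    by rewrite nas us.
  by move=> z; rewrite inE => /orP[/eqP ->//|/sI].
pose Y := rem a s.
have P := perm_to_rem as_.
have uY : uniq (a :: Y) by rewrite -(perm_uniq P).
have aY : a \notin Y by case/andP: uY.
have YI : forall z, z \in Y -> I z by move=> z /mem_rem /sI.
have sY : size Y = n.+1 by rewrite size_rem // ss.
rewrite (DD_perm _ P) DD_cons //= {1}/slope eqxx.
have -> : \sum_(y <- Y) slope f a c y / ((y - a) * \prod_(z <- Y | z != y) (y - z)) =
    \sum_(y <- Y) g y / ((y - a) * kap Y y).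
  rewrite big_seq [RHS]big_seq; apply: eq_bigr => y yY.
  have ya : y != a by apply/negP => /eqP ya; subst y; rewrite yY in aY.
  by rewrite /g /slope (negPf ya).
pose T t := g t / \prod_(y <- Y) (t - y) + \sum_(y <- Y) g y / ((y - t) * kap Y y).
have Tcvg : T t @[t --> a^'+] --> c / \prod_(y <- Y) (a - y) + \sum_(y <- Y) g y / ((y - a) * kap Y y).
  apply: cvgD.
    apply: cvgM => //; apply: cvgV; first exact: prod_sub_neq0.
    exact: picvg.
  apply: cvg_at_right_filter; apply: cvg_sumseq => b bY.
  apply: cvgM; first exact: cvg_cst.
  apply: cvgV.
    rewrite mulf_neq0 ?prod_filt_neq0 // subr_eq0.
    by apply/negP => /eqP ba; subst b; rewrite bY in aY.
  apply: cvgM; last exact: cvg_cst.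
  apply: cvgB; [exact: cvg_cst | exact: cvg_id].
apply: (cvgr_to_ge Tcvg); near=> t.
have at_ : a < t by near: t; exact: nbhs_right_gt.
have tw : t < w by near: t; exact: nbhs_right_lt.
have tY : t \notin Y by near: t; exact: near_notin.
have uTY : uniq (t :: Y) by rewrite /= tY; case/andP: uY.
have -> : T t = DD g (t :: Y) by rewrite DD_cons.
rewrite DD_slope //; last first.
  by rewrite /= inE negb_or tY aY (lt_eqF at_); case/andP: uY.
apply: hf => /=; first by rewrite sY.
  by rewrite inE negb_or tY aY (lt_eqF at_); case/andP: uY.
move=> z; rewrite !inE => /orP[/eqP ->//|/orP[/eqP ->|/YI //]]; exact: tI.
Unshelve. all: try by end_near.
Qed.

Theorem theorem1 (R : realType) (I : set R) (hI : Pilot.Defs.is_interval I)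
  (n : nat) (f : R -> R) (hf : n_convex I n f)
  (k : nat) (hk1 : (1 <= k)%N) (hkn : (k <= n)%N)
  (x : nat -> R) (l : nat -> nat)
  (hxI : forall j, (1 <= j <= k)%N -> I (x j))
  (hxinc : forall j, (1 <= j < k)%N -> x j < x j.+1)
  (hlpos : forall j, (1 <= j <= k)%N -> (0 < l j)%N)
  (hlsum : (\sum_(1 <= j < k.+1) l j)%N = n.+1)
  (hl1 : (forall y, I y -> x 1%N <= y) -> l 1%N = 1%N)
  (hlk : (forall y, I y -> y <= x k) -> l k = 1%N) :
  exists p : {poly R}, (size p <= n.+1)%N /\
    (forall j, (1 <= j <= k)%N -> p.[x j] = f (x j)) /\
    (forall y, I y -> y < x 1%N -> 0 <= (-1) ^+ n.+1 * (f y - p.[y])) /\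
    (forall j, (1 <= j < k)%N -> forall y, x j < y < x j.+1 ->
       0 <= (-1) ^+ (n.+1 - \sum_(1 <= i < j.+1) l i)%N * (f y - p.[y])) /\
    (forall y, I y -> x k < y -> 0 <= f y - p.[y]).
Proof.
exact: (theorem1_of (@EXT_proof R) hI hf hk1 hkn hxI hxinc hlpos hlsum hl1 hlk).
Qed.
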